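(* Let $m,T$ be positive integers with $T\ge 2$, let $n=2^T-1$, let $\mathbf{G}\in\mathbb{F}_2^{n\times m}$ have $n$ distinct nonzero rows $\mathbf{g}_1,\dots,\mathbf{g}_n$ spanning a subspace of dimension $T$ (so the rows are exactly the nonzero vectors of that subspace), and let $\mathbf{A}\in\mathbb{F}_2^{T\times m}$ have rows forming a basis of the row space of $\mathbf{G}$. For $1\le k\le T$ let $T_k^{\min}$ denote the smallest $T_k$ for which there is $\mathbf{P}\in\mathbb{F}_2^{T_k\times T}$ such that every $\mathbf{g}_i$ is a sum over $\mathbb{F}_2$ of at most $k$ rows of $\mathbf{P}\mathbf{A}$. Then: (i) for every $k<T$, $T_k^{\min}\ge T+1$; in particular, if $\lceil T/2\rceil\le k<T$ then $T_k^{\min}=T+1$; (ii) if $1\le k<\lceil T/2\rceil$ then $$T_k^{\min}\ \ge\ \frac{k}{e}\left(\frac{2^T-1}{k}\right)^{1/k}=2^{\Omega\left(\frac{T}{k}+\frac{k-1}{k}\log k\right)}.$$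
   Context: Logarithms are base 2 and $e$ is Euler's number. *)

(* Defs.v *)
From Stdlib Require Import Reals.
From HB Require Import structures.
From mathcomp Require Import all_boot all_order all_algebra.
Set Implicit Arguments. Unset Strict Implicit. Unset Printing Implicit Defensive.
Import GRing.Theory.

Definition feasible (T m n k Tk : nat) (G : 'M['F_2]_(n, m)) (A : 'M['F_2]_(T, m)) : Prop :=
  exists P : 'M['F_2]_(Tk, T),
    forall i : 'I_n, exists S : {set 'I_Tk},
      (#|S| <= k)%N /\ row i G = (\sum_(j in S) row j (P *m A))%R.

Definition is_Tmin (T m n k t : nat) (G : 'M['F_2]_(n, m)) (A : 'M['F_2]_(T, m)) : Prop :=
  feasible k t G A /\ forall Tk, feasible k Tk G A -> (t <= Tk)%N.

Definition ceil_half (T : nat) : nat := uphalf T.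

Definition lower_bound (T k : nat) : R :=
  Rmult (Rdiv (INR k) (exp 1))
        (Rpower (Rdiv (Rminus (pow 2 T) 1) (INR k)) (Rdiv 1 (INR k))).

(* Main.v *)
Require Import Defs.
From Stdlib Require Import Reals.
From HB Require Import structures.
From mathcomp Require Import all_boot all_order all_algebra.
Set Implicit Arguments. Unset Strict Implicit. Unset Printing Implicit Defensive.
Import GRing.Theory.

Lemma pick_sets (T m n k Tk : nat) (G : 'M['F_2]_(n, m)) (A : 'M['F_2]_(T, m)) :
  feasible k Tk G A ->
  injective (fun i : 'I_n => row i G) ->
  (forall i : 'I_n, row i G != 0%R) ->
  exists f : 'I_n -> {set 'I_Tk}, injective f /\ forall i, f i != set0 /\ (#|f i| <= k)%N.
Proof.
move=> [P HP] inj nz.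
pose Q i (S : {set 'I_Tk}) := (#|S| <= k)%N && (row i G == (\sum_(j in S) row j (P *m A))%R).
pose f i := odflt set0 [pick S | Q i S].
have fP i : Q i (f i).
  rewrite /f; case: pickP => [S //|H] /=.
  have [S [H1 H2]] := HP i. by move: (H S); rewrite /Q H1 H2 eqxx.
have fE i : row i G = (\sum_(j in f i) row j (P *m A))%R.
  by case/andP: (fP i) => _ /eqP.
exists f; split.
  by move=> i i' e; apply: inj; rewrite /= !fE e.
move=> i; split; last by case/andP: (fP i).
apply/negP => /eqP e; move: (nz i); rewrite fE e big_set0 eqxx //.
Qed.

Lemma count_le (n Tk : nat) (f : 'I_n -> {set 'I_Tk}) (B : {set {set 'I_Tk}}) :
  injective f -> (forall i, f i \in B) -> (n <= #|B|)%N.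
Proof.
move=> inj fB.
have <- : #|[set f x | x in [set: 'I_n]]| = n by rewrite card_imset // cardsT card_ord.
apply: subset_leq_card; apply/subsetP => S /imsetP [x _ ->]; exact: fB.
Qed.

Lemma card_sets (Tk : nat) : #|[set: {set 'I_Tk}]| = (2 ^ Tk)%N.
Proof.
have -> : [set: {set 'I_Tk}] = powerset [set: 'I_Tk].
  by apply/setP => S; rewrite powersetE subsetT in_setT.
by rewrite card_powerset cardsT card_ord.
Qed.

Lemma card_small (Tk k : nat) :
  #|[set S : {set 'I_Tk} | (#|S| <= k)%N]| = (\sum_(j < k.+1) 'C(Tk, j))%N.
Proof.
have CD j : 'C(Tk, j) = #|[set A : {set 'I_Tk} | #|A| == j]| by rewrite card_draws card_ord.
elim: k => [|k IH].
  rewrite big_ord1 CD.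
  suff -> : [set S : {set 'I_Tk} | (#|S| <= 0)%N] = [set A : {set 'I_Tk} | #|A| == 0%N] by [].
  by apply/setP => S; rewrite !inE leqn0.
rewrite big_ord_recr /= -IH.
rewrite CD.
rewrite -cardsUI.
have -> : [set S : {set 'I_Tk} | (#|S| <= k)%N] :&: [set S : {set 'I_Tk} | #|S| == k.+1] = set0.
  apply/setP => S; rewrite !inE; apply/negbTE/andP => -[h /eqP e]; by rewrite e ltnn in h.
rewrite cards0 addn0.
suff -> : [set S : {set 'I_Tk} | (#|S| <= k.+1)%N] = [set S : {set 'I_Tk} | (#|S| <= k)%N] :|: [set A : {set 'I_Tk} | #|A| == k.+1] by [].
by apply/setP => S; rewrite !inE leq_eqVlt ltnS orbC.
Qed.

From mathcomp Require Import zify.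

Lemma lower_T (T m k Tk : nat) (G : 'M['F_2]_(2 ^ T - 1, m)) (A : 'M['F_2]_(T, m)) :
  (k < T)%N -> feasible k Tk G A ->
  injective (fun i : 'I_(2 ^ T - 1) => row i G) ->
  (forall i : 'I_(2 ^ T - 1), row i G != 0%R) ->
  (T.+1 <= Tk)%N.
Proof.
move=> kT fe inj nz.
have [f [finj fP]] := pick_sets fe inj nz.
rewrite ltnNge; apply/negP => TkT.
have e1 : (1 <= 2 ^ Tk)%N by rewrite expn_gt0.
case: (ltnP Tk T) => h.
  have h2 : (2 ^ Tk < 2 ^ T)%N by rewrite ltn_exp2l.
  have := count_le (B := ~: [set set0]) finj.
  have -> : #|~: [set (set0 : {set 'I_Tk})]| = (2 ^ Tk - 1)%N.
    by have := cardsC [set (set0 : {set 'I_Tk})]; rewrite cards1 -cardsT card_sets; lia.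
  have /[swap] /[apply] : forall i, f i \in ~: [set set0].
    by move=> i; rewrite !inE; case: (fP i).
  move: h2 e1; set x := (2 ^ T)%N; set y := (2 ^ Tk)%N; lia.
have eT : Tk = T by apply/eqP; rewrite eqn_leq TkT h.
have ne : (set0 : {set 'I_Tk}) != setT.
  apply/eqP => e0; have := cardsT 'I_Tk; rewrite -e0 cards0 card_ord; lia.
have := count_le (B := ~: [set set0; setT]) finj.
have -> : #|~: [set (set0 : {set 'I_Tk}); setT]| = (2 ^ Tk - 2)%N.
  have := cardsC [set (set0 : {set 'I_Tk}); setT]; rewrite cards2 ne -cardsT card_sets; lia.
have /[swap] /[apply] : forall i, f i \in ~: [set set0; setT].
  move=> i; rewrite !inE negb_or; case: (fP i) => -> h3 /=.
  apply/eqP => e; move: h3; rewrite e cardsT card_ord; lia.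
subst Tk; have e2 : (2 ^ 1 <= 2 ^ T)%N by rewrite leq_exp2l //; lia.
move: e2; set x := (2 ^ T)%N; rewrite expn1; lia.
Qed.

Lemma F2_addxx (T : nat) (x : 'rV['F_2]_T) : (x + x = 0)%R.
Proof.
have -> : (x + x = (1+1 : 'F_2) *: x)%R by rewrite scalerDl scale1r.
have -> : (1 + 1 : 'F_2)%R = 0%R by apply: val_inj.
by rewrite scale0r.
Qed.

Lemma F2_1 (x : 'F_2) : x != 0%R -> x = 1%R.
Proof. by case: x => [[|[|x]] h] //= _; apply: val_inj. Qed.

Lemma feas_T1 (T m k n : nat) (G : 'M['F_2]_(n, m)) (A : 'M['F_2]_(T, m)) :
  (ceil_half T <= k)%N -> (G <= A)%MS -> feasible k T.+1 G A.
Proof.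
rewrite /ceil_half leq_uphalf_double => Tk GA.
pose P : 'M['F_2]_(T.+1, T) := (\matrix_(j, l) (if (j < T)%N then ((j == l :> nat)%:R) else 1))%R.
pose w (l : 'I_T) : 'I_T.+1 := widen_ord (leqnSn T) l.
have winj : injective w by move=> a b /(congr1 val) /= /val_inj.
have rw l : row (w l) (P *m A) = row l A.
  rewrite row_mul mulmx_sum_row (bigD1 l) //= big1 ?addr0.
    by rewrite /P !mxE /= ltn_ord eqxx scale1r.
  move=> l' nl; rewrite /P !mxE /= ltn_ord.
  have -> : (l == l' :> nat) = false by apply/negbTE; rewrite eq_sym.
  by rewrite scale0r.
have rmax : row ord_max (P *m A) = (\sum_l row l A)%R.
  rewrite row_mul mulmx_sum_row; apply: eq_bigr => l _.
  by rewrite /P !mxE /= ltnn scale1r.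
exists P => i.
have /submxP [D eD] : (row i G <= A)%MS by apply: submx_trans (row_sub i G) GA.
pose U := [set l | D ord0 l != 0%R].
have eU : row i G = (\sum_(l in U) row l A)%R.
  rewrite eD mulmx_sum_row (bigID (fun l => l \in U)) /= [X in (_ + X)%R]big1 ?addr0.
    apply: eq_bigr => l; rewrite inE => /F2_1 ->; by rewrite scale1r.
  by move=> l; rewrite inE negbK => /eqP ->; rewrite scale0r.
case: (leqP #|U| k) => hU.
  exists (w @: U); split; first by rewrite card_imset.
  rewrite eU big_imset /=; last by move=> a b _ _; apply: winj.
  by apply: eq_bigr => l _; rewrite rw.
exists (ord_max |: w @: ~: U); split.
  rewrite cardsU1 card_imset //.
  have := cardsC U; rewrite card_ord.
  move=> hc; move: (leq_b1 (ord_max \notin [set w x | x in ~: U])) Tk hU hc; clear; lia.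
rewrite big_setU1 /=; last first.
  apply/imsetP => -[l _ /(congr1 val) /= e]; move: (ltn_ord l); rewrite -e ltnn //.
rewrite big_imset /=; last by move=> a b _ _; apply: winj.
rewrite (eq_bigr (fun l => row l A)); last by move=> l _; exact: rw.
rewrite rmax eU (bigID (fun l => l \in U) predT) /= -addrA.
have -> : (\sum_(l | l \notin U) row l A = \sum_(l in ~: U) row l A)%R.
  by apply: eq_bigl => l; rewrite in_setC.
by rewrite F2_addxx addr0.
Qed.

Lemma exp_base_le (a b e : nat) : (a <= b)%N -> (a ^ e <= b ^ e)%N.
Proof. by case: e => [|e] h //; rewrite leq_exp2r. Qed.

Lemma nat_bound (n k : nat) : (k <= n)%N ->
  (k ^ k * n ^ (n - k) * (\sum_(j < k.+1) 'C(n, j)) <= (n + k) ^ n)%N.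
Proof.
move=> kn.
rewrite expnDn big_distrr /=.
rewrite (@big_ord_widen _ 0%N addn k.+1 n.+1 (fun j => k ^ k * n ^ (n - k) * 'C(n, j))%N) //.
rewrite [X in (_ <= X)%N](bigID (fun i : 'I_n.+1 => (i < k.+1)%N)) /=.
apply: leq_trans (leq_addr _ _).
apply: leq_sum => i hi; rewrite [X in (X <= _)%N]mulnC leq_mul2l; apply/orP; right.
have ik : (i <= k)%N by [].
have -> : (k ^ k = k ^ i * k ^ (k - i))%N by rewrite -expnD subnKC.
have -> : (n ^ (n - i) = n ^ (k - i) * n ^ (n - k))%N by rewrite -expnD; congr (_ ^ _); lia.
rewrite [X in (_ <= X)%N]mulnC -!mulnA leq_mul2l; apply/orP; right.
rewrite leq_mul2r; apply/orP; right.
exact: exp_base_le.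
Qed.

From Stdlib Require Import Lra.
Open Scope R_scope.

Lemma INR_expn (a b : nat) : INR (a ^ b)%N = INR a ^ b.
Proof. elim: b => [|b IH] //; rewrite expnS mulnE mult_INR IH /=; ring. Qed.

Lemma exp_pow_n (x : R) (n : nat) : exp x ^ n = exp (INR n * x).
Proof.
elim: n => [|n IH]; first by rewrite /= Rmult_0_l exp_0.
change (exp x ^ n.+1) with (exp x * exp x ^ n); rewrite IH S_INR -exp_plus; f_equal; ring.
Qed.

Lemma real_part (N n k : nat) : (1 <= k)%N -> (k <= n)%N -> (0 < N)%N ->
  (N * (k ^ k * n ^ (n - k)) <= (n + k) ^ n)%N ->
  (INR k / exp 1) * Rpower (INR N / INR k) (1 / INR k) <= INR n.
Proof.
move=> k1 kn N0 H.
have kpos : 0 < INR k by apply: lt_0_INR; apply/ltP.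
have npos : 0 < INR n by apply: lt_0_INR; apply/ltP; apply: leq_trans kn.
have Npos : 0 < INR N by apply: lt_0_INR; apply/ltP.
have H1 : INR N * (INR k ^ k * INR n ^ (n - k)) <= (INR n + INR k) ^ n.
  move/leP: H => /le_INR; by rewrite !mulnE !mult_INR !INR_expn plus_INR.
have H2 : (INR n + INR k) ^ n = INR n ^ (n - k) * INR n ^ k * (1 + INR k / INR n) ^ n.
  rewrite -pow_add plusE subnK // -Rpow_mult_distr; f_equal; field; lra.
have H3 : (1 + INR k / INR n) ^ n <= exp 1 ^ k.
  rewrite exp_pow_n Rmult_1_r.
  have -> : exp (INR k) = exp (INR n * (INR k / INR n)) by f_equal; field; lra.
  rewrite -exp_pow_n; apply: pow_incr; split.
    have : 0 < INR k / INR n by apply: Rdiv_lt_0_compat.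
    lra.
  have := exp_ineq1 (INR k / INR n).
  have : 0 < INR k / INR n by apply: Rdiv_lt_0_compat.
  move=> h1 h2; have := h2 ltac:(lra); lra.
pose z := exp 1 * INR n / INR k.
have zpos : 0 < z by rewrite /z; apply: Rdiv_lt_0_compat => //; apply: Rmult_lt_0_compat => //; apply: exp_pos.
have H4 : INR N <= z ^ k.
  have pk : 0 < INR k ^ k by apply: pow_lt.
  have pn : 0 < INR n ^ (n - k) by apply: pow_lt.
  have : INR N * INR k ^ k <= INR n ^ k * exp 1 ^ k.
    apply: (Rmult_le_reg_r (INR n ^ (n - k))) => //.
    have h : 0 <= INR n ^ (n - k) * INR n ^ k.
      apply: Rmult_le_pos; apply: pow_le; lra.
    have A1 := Rmult_le_compat_l _ _ _ h H3.
    rewrite H2 in H1; lra.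
  move=> h.
  have -> : z ^ k = INR n ^ k * exp 1 ^ k / INR k ^ k.
    rewrite /z /Rdiv Rpow_mult_distr Rpow_mult_distr pow_inv; ring.
  apply: (Rmult_le_reg_r (INR k ^ k)) => //.
  rewrite /Rdiv Rmult_assoc Rinv_l; lra.
have H5 : Rpower (INR N / INR k) (1 / INR k) <= z.
  have -> : z = Rpower (z ^ k) (1 / INR k).
    rewrite -Rpower_pow // Rpower_mult.
    have -> : INR k * (1 / INR k) = 1 by field; lra.
    by rewrite Rpower_1.
  apply: Rle_Rpower_l.
    have : 0 < 1 / INR k by apply: Rdiv_lt_0_compat; lra.
    lra.
  split; first by apply: Rdiv_lt_0_compat.
  apply: Rle_trans H4.
  have : 1 <= INR k by have := le_INR 1 k ltac:(apply/leP; exact k1).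
  move=> hk; rewrite /Rdiv; apply: (Rmult_le_reg_r (INR k)) => //.
  rewrite Rmult_assoc Rinv_l; nra.
have e0 : 0 < INR k / exp 1 by apply: Rdiv_lt_0_compat => //; apply: exp_pos.
apply: Rle_trans (Rmult_le_compat_l _ _ _ (Rlt_le _ _ e0) H5) _.
rewrite /z; apply: Req_le; field; split; [lra|].
have := exp_pos 1; lra.
Qed.

Close Scope R_scope.

Theorem lemma1 (m T : nat) (G : 'M['F_2]_(2 ^ T - 1, m)) (A : 'M['F_2]_(T, m)) :
  (0 < m)%N -> (2 <= T)%N ->
  injective (fun i : 'I_(2 ^ T - 1) => row i G) ->
  (forall i : 'I_(2 ^ T - 1), row i G != 0%R) ->
  \rank G = T ->
  row_free A -> (A == G)%MS ->
  (forall k : nat, (1 <= k)%N -> (k < T)%N ->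
     (forall Tk : nat, feasible k Tk G A -> (T.+1 <= Tk)%N) /\
     ((ceil_half T <= k)%N -> is_Tmin k T.+1 G A)) /\
  (forall k : nat, (1 <= k)%N -> (k < ceil_half T)%N ->
     forall Tk : nat, feasible k Tk G A -> Rge (INR Tk) (lower_bound T k)).
Proof.
move=> m0 T2 inj nz rk rf AG.
have GA : (G <= A)%MS by case/andP: AG.
split.
  move=> k k1 kT; split; first by move=> Tk fe; exact: lower_T kT fe inj nz.
  move=> hk; split; first exact: feas_T1 hk GA.
  move=> Tk fe; exact: lower_T kT fe inj nz.
move=> k k1 kh Tk fe.
have kT : (k < T)%N by move: kh; rewrite /ceil_half; lia.
have TkT := lower_T kT fe inj nz.
have [f [finj fP]] := pick_sets fe inj nz.
have cnt := count_le (B := [set S : {set 'I_Tk} | (#|S| <= k)%N]) finj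
   (fun i => ltac:(rewrite inE; case: (fP i) => _ h; exact h)).
rewrite card_small in cnt.
have kTk : (k <= Tk)%N by lia.
have nb := nat_bound kTk.
have e2 : (2 ^ 1 <= 2 ^ T)%N by rewrite leq_exp2l //; lia.
apply: Rle_ge; rewrite /lower_bound.
have -> : Rminus (pow 2 T) 1 = INR (2 ^ T - 1)%N.
  rewrite minus_INR; last by apply/leP; move: e2; rewrite expn1; lia.
  by rewrite INR_expn.
apply: real_part => //.
  by move: e2; rewrite expn1; lia.
apply: leq_trans nb; rewrite mulnC leq_mul2l cnt orbT //.
Qed.
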